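(* Let $X$ be a finite set, $f:2^X\to\mathbb{R}_{\ge0}$ a normalized monotone submodular function possessing supermodularity of conditioning, $n\le|X|$ a positive integer and $S^*\in\arg\max_{S\subseteq X,\,|S|\le n}f(S)$. Let $x_1,\dots,x_n\in X$ be arbitrary distinct elements, $S_0=\emptyset$, $S_i=\{x_1,\dots,x_i\}$. For each $i$ let $M_i:=\max_{x\in X\setminus S_{i-1}}\bar f(x\mid S_{i-1})$ and define $\beta_i:=\underline f(x_i\mid S_{i-1})/M_i$ if $\underline f(x_i\mid S_{i-1})>0$, and $\beta_i:=0$ otherwise. Then \[ f(S_n)\ \ge\ \left(1-e^{-\frac1n\sum_{i=1}^n\beta_i}\right)f(S^* ). \] (Here $\beta_i$ plays the role of $1/\alpha_i$ with $\alpha_i=M_i/\underline f(x_i\mid S_{i-1})$, and $\alpha_i=\infty$ when the lower estimate is not positive.)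
   Context: $f(x\mid A):=f(A\cup\{x\})-f(A)$, $f(x):=f(\{x\})$, $f(x\mid y):=f(x\mid\{y\})$. Pairwise upper estimate: $\bar f(x\mid S):=\min_{A\subseteq S,|A|\le1}f(x\mid A)$ (so $\bar f(x\mid\emptyset)=f(x)$). Pairwise lower estimate: $\underline f(x\mid S):=f(x)-\sum_{y\in S}(f(x)-f(x\mid y))$. Supermodularity of conditioning: for all $S\subseteq X$, $A\subseteq B\subseteq X$, $C\subseteq X\setminus B$, $f(S\mid A)-f(S\mid A\cup C)\ge f(S\mid B)-f(S\mid B\cup C)$, where $f(T\mid A):=f(A\cup T)-f(A)$. *)

(* Defs.v *)
From HB Require Import structures.
From mathcomp Require Import all_boot all_order all_algebra.
From mathcomp Require Import reals.
From mathcomp Require Import sequences exp.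
Set Implicit Arguments. Unset Strict Implicit. Unset Printing Implicit Defensive.
Import Order.TTheory GRing.Theory Num.Theory.
Local Open Scope ring_scope.

Section SetFunctions.
Variables (R : realType) (X : finType) (f : {set X} -> R).

Definition condf (T A : {set X}) : R := f (A :|: T) - f A.
Definition margf (x : X) (A : {set X}) : R := f (A :|: [set x]) - f A.

Definition normalized : Prop := f set0 = 0.
Definition nonneg : Prop := forall S, 0 <= f S.
Definition monotone : Prop := forall A B : {set X}, A \subset B -> f A <= f B.
Definition submodular : Prop :=
  forall A B : {set X}, f (A :|: B) + f (A :&: B) <= f A + f B.

Definition supermod_cond : Prop :=
  forall S A B C : {set X}, A \subset B -> [disjoint C & B] ->
    condf S A - condf S (A :|: C) >= condf S B - condf S (B :|: C).

Definition fbar (x : X) (S : {set X}) : R :=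
  \big[Num.min/margf x set0]_(A : {set X} | (A \subset S) && (#|A| <= 1)%N)
     margf x A.

Definition flow (x : X) (S : {set X}) : R :=
  f [set x] - \sum_(y in S) (f [set x] - margf x [set y]).

End SetFunctions.

(* S_i = {x_1, ..., x_i}, with the sequence indexed 0-based by 'I_n:
   Sprefix x i = { x j | j < i } *)
Definition Sprefix (X : finType) (n : nat) (x : 'I_n -> X) (i : nat) : {set X} :=
  x @: [set j : 'I_n | (j < i)%N].

(* M_i = max_{y in X \ S_{i-1}} fbar(y | S_{i-1})  (default 0; the index set
   is nonempty and fbar >= 0 under the hypotheses) *)
Definition Mval (R : realType) (X : finType) (f : {set X} -> R) (S : {set X}) : R :=
  \big[Num.max/0]_(y in ~: S) fbar f y S.

Definition betaval (R : realType) (X : finType) (f : {set X} -> R)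
    (xi : X) (S : {set X}) : R :=
  if 0 < flow f xi S then flow f xi S / Mval f S else 0.

(* Main.v *)
Require Import Defs.
From HB Require Import structures.
From mathcomp Require Import all_boot all_order all_algebra.
From mathcomp Require Import reals.
From mathcomp Require Import sequences exp.
From mathcomp Require Import ring lra.
Import Order.TTheory GRing.Theory Num.Theory.
Local Open Scope ring_scope.

Lemma dimret (R : realType) (X : finType) (f : {set X} -> R)
  (f_mono : monotone f) (f_sub : submodular f) (x : X) (A B : {set X}) :
  A \subset B -> margf f x B <= margf f x A.
Proof.
move=> sAB; rewrite /margf.
have h := f_sub (A :|: [set x]) B.
rewrite setUAC (setUidPr sAB) in h.
have h2 : f A <= f ((A :|: [set x]) :&: B).
  by apply: f_mono; rewrite subsetI subsetUl sAB.
lra.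
Qed.
Arguments dimret {R X f}.

Lemma setind (X : finType) (P : {set X} -> Prop) :
  P set0 -> (forall (y : X) (T : {set X}), y \notin T -> P T -> P (y |: T)) -> forall T, P T.
Proof.
move=> P0 Ps T; move: {2}#|T| (erefl #|T|) => k; elim: k T => [|k IH] T hT.
  by move/eqP: hT; rewrite cards_eq0 => /eqP ->.
have [y yT] : exists y, y \in T.
  by apply/set0Pn; rewrite -card_gt0 hT.
rewrite -(setD1K yT); apply: Ps; first by rewrite setD11.
by apply: IH; move: hT; rewrite (cardsD1 y) yT add1n => -[].
Qed.

Lemma cover_sum (R : realType) (X : finType) (f : {set X} -> R)
  (f_mono : monotone f) (f_sub : submodular f) (S T : {set X}) :
  f (S :|: T) - f S <= \sum_(y in T) margf f y S.
Proof.
elim/setind: T => [|y T yT IH]; first by rewrite setU0 big_set0 subrr.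
rewrite big_setU1 //=.
have e : S :|: (y |: T) = (S :|: T) :|: [set y] by rewrite setUA setUAC.
rewrite e.
have := dimret f_mono f_sub y _ _ (subsetUl S T).
rewrite /margf; lra.
Qed.
Arguments cover_sum {R X f}.

Lemma flow_le (R : realType) (X : finType) (f : {set X} -> R)
  (f_norm : normalized f) (f_smc : supermod_cond f) (x : X) (S : {set X}) :
  flow f x S <= margf f x S.
Proof.
elim/setind: S => [|y T yT IH].
  by rewrite /flow /margf big_set0 set0U f_norm !subr0.
rewrite /flow big_setU1 //=.
have dj : [disjoint [set y] & T] by rewrite disjoints1.
have h := f_smc [set x] _ _ _ (sub0set T) dj.
move: h IH; have -> : T :|: [set y] = y |: T by rewrite setUC.
rewrite /condf /margf /flow !set0U f_norm; lra.
Qed.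
Arguments flow_le {R X f}.


Lemma fbar_ge (R : realType) (X : finType) (f : {set X} -> R)
  (f_mono : monotone f) (f_sub : submodular f) (x : X) (S : {set X}) :
  margf f x S <= fbar f x S.
Proof.
rewrite /fbar; elim/big_rec: _ => [|A m /andP[sAS _] h].
  exact: dimret f_mono f_sub x _ _ (sub0set S).
by rewrite le_min h (dimret f_mono f_sub x _ _ sAS).
Qed.
Arguments fbar_ge {R X f}.

Lemma M_ge0 (R : realType) (X : finType) (f : {set X} -> R) (S : {set X}) :
  0 <= Mval f S.
Proof.
by rewrite /Mval; elim/big_rec: _ => // i m _ h; rewrite le_max h orbT.
Qed.

Lemma M_ge (R : realType) (X : finType) (f : {set X} -> R) (S : {set X}) y :
  y \notin S -> fbar f y S <= Mval f S.
Proof.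
move=> yS; rewrite /Mval (bigD1 y) /=; last by rewrite inE.
by rewrite le_max lexx.
Qed.
Arguments M_ge {R X} f {S y}.

Lemma gap_le (R : realType) (X : finType) (f : {set X} -> R)
  (f_mono : monotone f) (f_sub : submodular f) (n : nat) (Sstar S : {set X}) :
  (#|Sstar| <= n)%N -> f Sstar - f S <= n%:R * Mval f S.
Proof.
move=> hc.
have h1 : f Sstar <= f (S :|: Sstar) by apply: f_mono; rewrite subsetUr.
have h2 := cover_sum f_mono f_sub S Sstar.
have h3 : \sum_(y in Sstar) margf f y S <= \sum_(y in Sstar) Mval f S.
  apply: ler_sum => y _.
  case: (boolP (y \in S)) => yS.
    rewrite /margf (setUidPl _); last by rewrite sub1set.
    by rewrite subrr M_ge0.
  exact: le_trans (fbar_ge f_mono f_sub y S) (M_ge f yS).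
rewrite sumr_const -mulr_natl in h3.
have h4 : #|Sstar|%:R * Mval f S <= n%:R * Mval f S.
  by apply: ler_wpM2r; [exact: M_ge0 | rewrite ler_nat].
lra.
Qed.
Arguments gap_le {R X f}.

Lemma step (R : realType) (X : finType) (f : {set X} -> R)
  (f_norm : normalized f) (f_mono : monotone f) (f_sub : submodular f)
  (f_smc : supermod_cond f) (n : nat) (n_pos : (0 < n)%N)
  (Sstar S : {set X}) (xi : X) :
  (#|Sstar| <= n)%N -> xi \notin S ->
  f Sstar - f (S :|: [set xi]) <=
    (1 - betaval f xi S / n%:R) * (f Sstar - f S).
Proof.
move=> hc xS.
have hm : f (S :|: [set xi]) = f S + margf f xi S by rewrite /margf; lra.
have m0 : 0 <= margf f xi S.
  by rewrite /margf subr_ge0; apply: f_mono; rewrite subsetUl.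
have hg := gap_le f_mono f_sub _ _ S hc.
have n0 : 0 < n%:R :> R by rewrite ltr0n.
rewrite /betaval; case: ifP => hfl; last first.
  by rewrite mul0r subr0 mul1r hm; lra.
have mM : margf f xi S <= Mval f S :=
  le_trans (fbar_ge f_mono f_sub xi S) (M_ge f xS).
have hfm := flow_le f_norm f_smc xi S.
have M0 : 0 < Mval f S by apply: lt_le_trans hfl (le_trans hfm mM).
set fl := flow f xi S in hfl hfm *.
set M := Mval f S in hg mM M0 *.
set D := f Sstar - f S in hg *.
have -> : (1 - fl / M / n%:R) * D = D - (fl / M / n%:R) * D by ring.
suff : fl / M / n%:R * D <= margf f xi S by rewrite hm /D; lra.
have b0 : 0 <= fl / M / n%:R by rewrite !divr_ge0 // ?ltW.
apply: le_trans (_ : fl / M / n%:R * (n%:R * M) <= _).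
  exact: ler_wpM2l.
have -> : fl / M / n%:R * (n%:R * M) = fl by field; rewrite ?gt_eqF.
by [].
Qed.
Arguments step {R X f}.

Lemma Sprefix0 (X : finType) (n : nat) (x : 'I_n -> X) : Sprefix x 0 = set0.
Proof.
rewrite /Sprefix.
have -> : [set j : 'I_n | (j < 0)%N] = set0 by apply/setP => j; rewrite !inE.
by rewrite imset0.
Qed.

Lemma SprefixS (X : finType) (n : nat) (x : 'I_n -> X) k (hk : (k < n)%N) :
  Sprefix x k.+1 = Sprefix x k :|: [set x (Ordinal hk)].
Proof.
rewrite /Sprefix -imset_set1 -imsetU.
have -> : [set j : 'I_n | (j < k.+1)%N] = [set j : 'I_n | (j < k)%N] :|: [set Ordinal hk].
  by apply/setP => j; rewrite !inE ltnS leq_eqVlt -val_eqE /= orbC.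
by [].
Qed.

Lemma Sprefix_notin (X : finType) (n : nat) (x : 'I_n -> X) (x_inj : injective x)
  k (hk : (k < n)%N) : x (Ordinal hk) \notin Sprefix x k.
Proof.
apply/imsetP => -[j]; rewrite inE => hj /x_inj e.
by move: hj; rewrite -e /= ltnn.
Qed.

Lemma Sprefix_card (X : finType) (n : nat) (x : 'I_n -> X) k :
  (#|Sprefix x k| <= n)%N.
Proof.
apply: leq_trans (leq_imset_card _ _) _.
by apply: leq_trans (max_card _) _; rewrite card_ord.
Qed.

Theorem mainTheorem8 (R : realType) (X : finType) (f : {set X} -> R)
  (f_nonneg : nonneg f) (f_norm : normalized f) (f_mono : monotone f)
  (f_sub : submodular f) (f_smc : supermod_cond f)
  (n : nat) (n_pos : (0 < n)%N) (n_le : (n <= #|X|)%N)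
  (Sstar : {set X}) (Sstar_card : (#|Sstar| <= n)%N)
  (Sstar_opt : forall S : {set X}, (#|S| <= n)%N -> f S <= f Sstar)
  (x : 'I_n -> X) (x_inj : injective x) :
  f (Sprefix x n) >=
    (1 - expR (- ((n%:R)^-1 * \sum_(i < n) betaval f (x i) (Sprefix x i))))
      * f Sstar.
Proof.
set b := fun i : 'I_n => betaval f (x i) (Sprefix x i).
have key : forall k, (k <= n)%N ->
  f Sstar - f (Sprefix x k) <=
    expR (- ((n%:R)^-1 * \sum_(i < n | (i < k)%N) b i)) * f Sstar.
  elim => [|k IH] hk.
    rewrite Sprefix0 f_norm big_pred0 ?mulr0 ?oppr0 ?expR0; last by move=> i.
    by rewrite mul1r addr0.
  have hk' : (k < n)%N by [].
  have IH' := IH (ltnW hk).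
  have a0 : 0 <= f Sstar - f (Sprefix x k) by rewrite subr_ge0; apply: Sstar_opt; apply: Sprefix_card.
  have st := step f_norm f_mono f_sub f_smc _ n_pos _ _ _ Sstar_card (Sprefix_notin _ _ _ x_inj _ hk').
  rewrite -SprefixS in st.
  rewrite (bigD1 (Ordinal hk')) //=.
  have -> : \sum_(i < n | (i < k.+1)%N && (i != Ordinal hk')) b i =
            \sum_(i < n | (i < k)%N) b i.
    by apply: eq_bigl => i; rewrite ltnS -val_eqE /= andbC -ltn_neqAle.
  set B := b (Ordinal hk'); set Sg := \sum_(i < n | (i < k)%N) b i.
  have eB : B = betaval f (x (Ordinal hk')) (Sprefix x k) by [].
  rewrite -eB in st.
  have e1 : 1 - B / n%:R <= expR (- (B / n%:R)).
    by have := expR_ge1Dx (- (B / n%:R)); rewrite -[1 - _]/(1 + - _).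
  have e2 : (1 - B / n%:R) * (f Sstar - f (Sprefix x k)) <=
            expR (- (B / n%:R)) * (f Sstar - f (Sprefix x k)) by exact: ler_wpM2r.
  have e3 : expR (- (B / n%:R)) * (f Sstar - f (Sprefix x k)) <=
            expR (- (B / n%:R)) * (expR (- ((n%:R)^-1 * Sg)) * f Sstar).
    by apply: ler_wpM2l; [exact: expR_ge0 | exact: IH'].
  have -> : - ((n%:R)^-1 * (B + Sg)) = - (B / n%:R) + - ((n%:R)^-1 * Sg).
    by rewrite /=; ring.
  rewrite expRD -mulrA.
  exact: le_trans st (le_trans e2 e3).
have := key n (leqnn n).
have -> : \sum_(i < n | (i < n)%N) b i = \sum_(i < n) b i.
  by apply: eq_bigl => i; rewrite ltn_ord.
move=> h; rewrite mulrBl mul1r; lra.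
Qed.
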